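(* Let $A=\mathbb{F}_2\mathbb{Z}_3$ with calculus as in the context, and $z=1+x$. Then: (a) The central elements of $\Omega^1\otimes_A\Omega^1$ are exactly $\alpha z\,\omega^1\otimes\omega^1+\alpha\,\omega^1\otimes\omega^2+\beta z\,\omega^2\otimes\omega^1+\beta\,\omega^2\otimes\omega^2$ with $\alpha,\beta\in A$ (coefficients acting on the left), and such an element is quantum symmetric if and only if $\alpha=z\beta$, giving $g_\beta:=\beta\big(z^2\omega^1\otimes\omega^1+z\,\omega^1\otimes\omega^2+z\,\omega^2\otimes\omega^1+\omega^2\otimes\omega^2\big)$. (b) For each $\beta\in\{1,z,z^2\}$, $g_\beta$ is an invertible metric admitting exactly four QLCs, exactly one of which is flat. The three non-flat QLCs for a given $\beta$ all have the same curvature, namely: for $\beta=1$, $R_\nabla\omega^1=z^2\mathrm{Vol}\otimes\omega^1+z\mathrm{Vol}\otimes\omega^2$, $R_\nabla\omega^2=\mathrm{Vol}\otimes\omega^1$; for $\beta=z$, $R_\nabla\omega^1=z^2\mathrm{Vol}\otimes\omega^2$, $R_\nabla\omega^2=z\mathrm{Vol}\otimes\omega^1+\mathrm{Vol}\otimes\omega^2$; for $\beta=z^2$, $R_\nabla\omega^i=z\mathrm{Vol}\otimes\omega^i$ ($i=1,2$). (c) The quantum dimension of $g_\beta$ is $1,1,0$ for $\beta=1,z,z^2$ respectively, and for every QLC the Laplacian is independent of the QLC and given (with $\Delta1=0$) by: $\beta=1$: $\Delta z=1$, $\Delta z^2=z$; $\beta=z$: $\Delta z=z^2$, $\Delta z^2=1$;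 $\beta=z^2$: $\Delta=0$.
   Context: Algebra D: $A$ is the commutative algebra over $\mathbb{F}_2$ with basis $1,x,y$ and $x^2=y$, $y^2=x$, $xy=x+y$; with $z=1+x$ one has $z^2=1+y$, $z^3=1$ (so $A\cong\mathbb{F}_2\mathbb{Z}_3$). $\Omega^1$ is the universal calculus, free as a left module on $\omega^1=\mathrm{d}x$, $\omega^2=\mathrm{d}y$, with $\omega^1z=z\omega^1+\omega^2$, $\omega^2z=z^2\omega^1$. $\Omega^2=A\,\mathrm{Vol}$ is free of rank one with central basis $\mathrm{Vol}$ and $\omega^1\wedge\omega^1=\mathrm{Vol}$, $\omega^2\wedge\omega^2=z^2\mathrm{Vol}$, $\omega^1\wedge\omega^2=\omega^2\wedge\omega^1=0$, $\mathrm{d}\omega^i=0$. Definitions: $g\in\Omega^1\otimes_A\Omega^1$ is central if $ag=ga$ for all $a$; quantum symmetric if $\wedge(g)=0$; an invertible metric if there is a bimodule map $(\ ,\ ):\Omega^1\otimes_A\Omega^1\to A$ with $((\eta,\ )\otimes\mathrm{id})g=\eta=(\mathrm{id}\otimes(\ ,\eta))g$ for all $\eta$. A left connection is $\nabla:\Omega^1\to\Omega^1\otimes_A\Omega^1$ with $\nabla(a\omega)=a\nabla\omega+\mathrm{d}a\otimes\omega$; a bimodule connection has in addition a bimodule map $\sigma$ with $\nabla(\omega a)=(\nabla\omega)a+\sigma(\omega\otimes\mathrm{d}a)$. A QLC for $g$ is a bimodule connection that is torsion free ($\wedge\nabla=\mathrm{d}$ on $\Omega^1$) and metric compatible ($(\nabla\otimes\mathrm{id})g+(\sigma\otimes\mathrm{id})(\mathrm{id}\otimes\nabla)g=0$).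 Curvature: $R_\nabla=(\mathrm{d}\otimes\mathrm{id}-\mathrm{id}\wedge\nabla)\nabla:\Omega^1\to\Omega^2\otimes_A\Omega^1$; flat means $R_\nabla=0$. Laplacian $\Delta=(\ ,\ )\nabla\mathrm{d}:A\to A$; quantum dimension $(\ ,\ )(g)$. *)

(* Defs.v *)
From Stdlib Require Import Bool List.
Import ListNotations.

(* The algebra A over F_2 with basis 1, x, y; x^2 = y, y^2 = x, xy = x+y. *)
(* An element a0*1 + a1*x + a2*y is recorded by its three F_2 coordinates. *)
Record A := mkA { a0 : bool; a1 : bool; a2 : bool }.

Definition Azero : A := mkA false false false.
Definition Aone  : A := mkA true false false.
Definition Ax    : A := mkA false true false.
Definition Ay    : A := mkA false false true.
Definition Aadd (a b : A) : A := mkA (xorb (a0 a) (a0 b)) (xorb (a1 a) (a1 b)) (xorb (a2 a) (a2 b)).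
(* (a0 + a1 x + a2 y)(b0 + b1 x + b2 y) using x^2 = y, y^2 = x, xy = x + y *)
Definition Amul (a b : A) : A :=
  let c := xorb (a1 a && a2 b) (a2 a && a1 b) in
  mkA (a0 a && a0 b)
      (xorb (xorb (xorb (a0 a && a1 b) (a1 a && a0 b)) (a2 a && a2 b)) c)
      (xorb (xorb (xorb (a0 a && a2 b) (a2 a && a0 b)) (a1 a && a1 b)) c).
Definition Asc (b : bool) : A := mkA b false false.
Definition Az  : A := Aadd Aone Ax.
Definition Az2 : A := Amul Az Az.

(* Omega^1 : free left module on omega^1 = dx, omega^2 = dy.          *)
(* w = o1 w * omega^1 + o2 w * omega^2 (left coefficients).           *)
Record Om1 := mkO1 { o1 : A; o2 : A }.
Definition O1zero : Om1 := mkO1 Azero Azero.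
Definition O1add (u v : Om1) : Om1 := mkO1 (Aadd (o1 u) (o1 v)) (Aadd (o2 u) (o2 v)).
Definition O1lmul (a : A) (u : Om1) : Om1 := mkO1 (Amul a (o1 u)) (Amul a (o2 u)).
Definition e1 : Om1 := mkO1 Aone Azero.
Definition e2 : Om1 := mkO1 Azero Aone.
(* right multiplication by z, from omega^1 z = z omega^1 + omega^2, omega^2 z = z^2 omega^1 *)
Definition O1rz (u : Om1) : Om1 :=
  mkO1 (Aadd (Amul (o1 u) Az) (Amul (o2 u) Az2)) (o1 u).
(* right multiplication by a general a, using x = 1 + z, y = x^2 = 1 + z^2 *)
Definition O1rmul (u : Om1) (a : A) : Om1 :=
  O1add (O1add (if a0 a then u else O1zero)
               (if a1 a then O1add u (O1rz u) else O1zero))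
        (if a2 a then O1add u (O1rz (O1rz u)) else O1zero).
Definition dA (a : A) : Om1 := mkO1 (Asc (a1 a)) (Asc (a2 a)).

(* Omega^1 (x)_A Omega^1 : free left module on omega^i (x) omega^j.    *)
Record T := mkT { t11 : A; t12 : A; t21 : A; t22 : A }.
Definition Tzero : T := mkT Azero Azero Azero Azero.
Definition Tadd (X Y : T) : T :=
  mkT (Aadd (t11 X) (t11 Y)) (Aadd (t12 X) (t12 Y)) (Aadd (t21 X) (t21 Y)) (Aadd (t22 X) (t22 Y)).
Definition Tlmul (a : A) (X : T) : T :=
  mkT (Amul a (t11 X)) (Amul a (t12 X)) (Amul a (t21 X)) (Amul a (t22 X)).
Definition tens (u v : Om1) : T :=
  let p := O1rmul u (o1 v) in let q := O1rmul u (o2 v) in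
  mkT (o1 p) (o1 q) (o2 p) (o2 q).
(* X = col1 X (x) omega^1 + col2 X (x) omega^2 *)
Definition col1 (X : T) : Om1 := mkO1 (t11 X) (t21 X).
Definition col2 (X : T) : Om1 := mkO1 (t12 X) (t22 X).
Definition Trmul (X : T) (a : A) : T :=
  Tadd (tens (col1 X) (O1rmul e1 a)) (tens (col2 X) (O1rmul e2 a)).

(* Omega^2 = A Vol, identified with A (coefficient of Vol).          *)
(* wedge : omega^1^omega^1 = Vol, omega^2^omega^2 = z^2 Vol, others 0 *)
Definition wedge (X : T) : A := Aadd (t11 X) (Amul Az2 (t22 X)).
Definition d1 (w : Om1) : A :=
  Aadd (wedge (tens (dA (o1 w)) e1)) (wedge (tens (dA (o2 w)) e2)).

(* Omega^2 (x)_A Omega^1 : free left module on Vol (x) omega^1, Vol (x) omega^2 *)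
Record V := mkV { v1 : A; v2 : A }.
Definition Vzero : V := mkV Azero Azero.
Definition Vadd (P Q : V) : V := mkV (Aadd (v1 P) (v1 Q)) (Aadd (v2 P) (v2 Q)).
(* (a Vol) (x) eta, Vol central *)
Definition volt (a : A) (eta : Om1) : V := mkV (Amul a (o1 eta)) (Amul a (o2 eta)).

Definition left_connection (nab : Om1 -> T) : Prop :=
  (forall u v, nab (O1add u v) = Tadd (nab u) (nab v)) /\
  (forall a u, nab (O1lmul a u) = Tadd (Tlmul a (nab u)) (tens (dA a) u)).

Definition bimodule_map_T (sigma : T -> T) : Prop :=
  (forall X Y, sigma (Tadd X Y) = Tadd (sigma X) (sigma Y)) /\
  (forall a X, sigma (Tlmul a X) = Tlmul a (sigma X)) /\
  (forall a X, sigma (Trmul X a) = Trmul (sigma X) a).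

Definition bimodule_connection (nab : Om1 -> T) (sigma : T -> T) : Prop :=
  left_connection nab /\ bimodule_map_T sigma /\
  (forall u a, nab (O1rmul u a) = Tadd (Trmul (nab u) a) (sigma (tens u (dA a)))).

Definition torsion_free (nab : Om1 -> T) : Prop :=
  forall u, wedge (nab u) = d1 u.

(* Omega^1 (x) Omega^1 (x) Omega^1 is represented as T * T :
   (P, Q) stands for P (x) omega^1 + Q (x) omega^2. *)
Definition metric_compatible (nab : Om1 -> T) (sigma : T -> T) (g : T) : Prop :=
  (* (nab (x) id) g + (sigma (x) id)(id (x) nab) g = 0, using g = sum_j col_j g (x) omega^j *)
  Tadd (nab (col1 g))
       (Tadd (sigma (tens (col1 g) (col1 (nab e1)))) (sigma (tens (col2 g) (col1 (nab e2)))))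
    = Tzero /\
  Tadd (nab (col2 g))
       (Tadd (sigma (tens (col1 g) (col2 (nab e1)))) (sigma (tens (col2 g) (col2 (nab e2)))))
    = Tzero.

Definition QLC (g : T) (nab : Om1 -> T) (sigma : T -> T) : Prop :=
  bimodule_connection nab sigma /\ torsion_free nab /\ metric_compatible nab sigma g.

(* curvature R = (d (x) id - id ^ nab) nab (characteristic 2: - = +) *)
Definition wedgeL (xi : Om1) (Y : T) : V :=
  Vadd (volt (wedge (tens xi (col1 Y))) e1) (volt (wedge (tens xi (col2 Y))) e2).
Definition curv_op (nab : Om1 -> T) (X : T) : V :=
  Vadd (Vadd (volt (d1 (col1 X)) e1) (wedgeL (col1 X) (nab e1)))
       (Vadd (volt (d1 (col2 X)) e2) (wedgeL (col2 X) (nab e2))).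
Definition curvature (nab : Om1 -> T) (u : Om1) : V := curv_op nab (nab u).
Definition flat (nab : Om1 -> T) : Prop := forall u, curvature nab u = Vzero.

Definition central (g : T) : Prop := forall a, Tlmul a g = Trmul g a.
Definition quantum_symmetric (g : T) : Prop := wedge g = Azero.

Definition inverse_metric (g : T) (pr : T -> A) : Prop :=
  (forall X Y, pr (Tadd X Y) = Aadd (pr X) (pr Y)) /\
  (forall a X, pr (Tlmul a X) = Amul a (pr X)) /\
  (forall a X, pr (Trmul X a) = Amul (pr X) a) /\
  (forall eta,
     (* ((eta, ) (x) id) g = eta *)
     mkO1 (pr (tens eta (col1 g))) (pr (tens eta (col2 g))) = eta /\
     (* (id (x) ( , eta)) g = eta *)
     O1add (O1rmul (col1 g) (pr (tens e1 eta))) (O1rmul (col2 g) (pr (tens e2 eta))) = eta).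

Definition invertible_metric (g : T) : Prop := exists pr, inverse_metric g pr.

Definition quantum_dimension (pr : T -> A) (g : T) : A := pr g.
Definition laplacian (pr : T -> A) (nab : Om1 -> T) (f : A) : A := pr (nab (dA f)).

Definition central_form (alpha beta : A) : T :=
  mkT (Amul alpha Az) alpha (Amul beta Az) beta.
Definition gmet (beta : A) : T :=
  Tlmul beta (mkT Az2 Az Az Aone).

Definition conn_eq (c c' : (Om1 -> T) * (T -> T)) : Prop :=
  (forall u, fst c u = fst c' u) /\ (forall X, snd c X = snd c' X).

Definition exactly {X : Type} (R : X -> X -> Prop) (P : X -> Prop) (n : nat) : Prop :=
  exists l : list X,
    length l = n /\ (forall x, In x l -> P x) /\
    ForallOrdPairs (fun x y => ~ R x y) l /\
    (forall x, P x -> exists y, In y l /\ R x y).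

Definition isQLC (g : T) (c : (Om1 -> T) * (T -> T)) : Prop := QLC g (fst c) (snd c).
Definition isFlatQLC (g : T) (c : (Om1 -> T) * (T -> T)) : Prop :=
  QLC g (fst c) (snd c) /\ flat (fst c).

(* Main.v *)
Require Import Defs.
From Stdlib Require Import Bool List Ring.
Import ListNotations.

Lemma A_sr : semi_ring_theory Azero Aone Aadd Amul (@eq A).
Proof.
  constructor; intros;
  repeat match goal with a : A |- _ => destruct a as [[] [] []] end; reflexivity.
Qed.
Add Ring Aring : A_sr.

Ltac dA_all := repeat match goal with a : A |- _ => destruct a as [[] [] []] end.

Lemma Aadd_cancel r s : Aadd (Aadd r s) r = s.
Proof. dA_all; reflexivity. Qed.
Lemma Aadd_zero_eq a b : Aadd a b = Azero -> a = b.
Proof. dA_all; vm_compute; intro H; first [reflexivity | discriminate]. Qed.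

Definition Aeqb (a b : A) : bool := Bool.eqb (a0 a) (a0 b) && Bool.eqb (a1 a) (a1 b) && Bool.eqb (a2 a) (a2 b).
Lemma Aeqb_eq a b : Aeqb a b = true -> a = b.
Proof. destruct a as [[] [] []], b as [[] [] []]; vm_compute; intro H; first [reflexivity | discriminate]. Qed.
Lemma Aeqb_refl a : Aeqb a a = true.
Proof. destruct a as [[] [] []]; reflexivity. Qed.
Definition Teqb (X Y : T) : bool := Aeqb (t11 X) (t11 Y) && Aeqb (t12 X) (t12 Y) && Aeqb (t21 X) (t21 Y) && Aeqb (t22 X) (t22 Y).
Lemma Teqb_eq X Y : Teqb X Y = true -> X = Y.
Proof. destruct X, Y; unfold Teqb; simpl; intro H;
  repeat rewrite andb_true_iff in H; destruct H as [[[H1 H2] H3] H4];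
  apply Aeqb_eq in H1, H2, H3, H4; subst; reflexivity. Qed.
Lemma Teqb_refl X : Teqb X X = true.
Proof. destruct X; unfold Teqb; simpl; rewrite !Aeqb_refl; reflexivity. Qed.
Definition O1eqb (u v : Om1) : bool := Aeqb (o1 u) (o1 v) && Aeqb (o2 u) (o2 v).
Lemma O1eqb_eq u v : O1eqb u v = true -> u = v.
Proof. destruct u, v; unfold O1eqb; simpl; intro H; apply andb_true_iff in H; destruct H as [H1 H2];
  apply Aeqb_eq in H1, H2; subst; reflexivity. Qed.
Definition Veqb (u v : V) : bool := Aeqb (v1 u) (v1 v) && Aeqb (v2 u) (v2 v).
Lemma Veqb_eq u v : Veqb u v = true -> u = v.
Proof. destruct u, v; unfold Veqb; simpl; intro H; apply andb_true_iff in H; destruct H as [H1 H2];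
  apply Aeqb_eq in H1, H2; subst; reflexivity. Qed.

Definition allA : list A := flat_map (fun x => flat_map (fun y => map (fun z => mkA x y z) [true;false]) [true;false]) [true;false].
Lemma allA_spec a : In a allA. Proof. destruct a as [[] [] []]; simpl; tauto. Qed.
Definition allO : list Om1 := flat_map (fun a => map (fun b => mkO1 a b) allA) allA.
Lemma allO_spec u : In u allO.
Proof. destruct u as [a b]; unfold allO; apply in_flat_map; exists a; split; [apply allA_spec|].
  apply in_map_iff; exists b; split; [reflexivity | apply allA_spec]. Qed.
Definition allT : list T := flat_map (fun a => flat_map (fun b => flat_map (fun c => map (fun d => mkT a b c d) allA) allA) allA) allA.
Lemma allT_spec X : In X allT.
Proof. destruct X as [a b c d]; unfold allT.
  apply in_flat_map; exists a; split; [apply allA_spec|].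
  apply in_flat_map; exists b; split; [apply allA_spec|].
  apply in_flat_map; exists c; split; [apply allA_spec|].
  apply in_map_iff; exists d; split; [reflexivity | apply allA_spec]. Qed.
Lemma forallA (f : A -> bool) : forallb f allA = true -> forall a, f a = true.
Proof. rewrite forallb_forall; intros H a; apply H, allA_spec. Qed.
Lemma forallO (f : Om1 -> bool) : forallb f allO = true -> forall a, f a = true.
Proof. rewrite forallb_forall; intros H a; apply H, allO_spec. Qed.
Lemma forallT (f : T -> bool) : forallb f allT = true -> forall a, f a = true.
Proof. rewrite forallb_forall; intros H a; apply H, allT_spec. Qed.

Definition E11 := mkT Aone Azero Azero Azero.
Definition E12 := mkT Azero Aone Azero Azero.
Definition E21 := mkT Azero Azero Aone Azero.
Definition E22 := mkT Azero Azero Azero Aone.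

Definition NabF (n1 n2 : T) (u : Om1) : T :=
  Tadd (Tadd (Tlmul (o1 u) n1) (tens (dA (o1 u)) e1)) (Tadd (Tlmul (o2 u) n2) (tens (dA (o2 u)) e2)).
Definition SigF (s11 s12 s21 s22 : T) (X : T) : T :=
  Tadd (Tadd (Tlmul (t11 X) s11) (Tlmul (t12 X) s12)) (Tadd (Tlmul (t21 X) s21) (Tlmul (t22 X) s22)).
Definition PrF (p11 p12 p21 p22 : A) (X : T) : A :=
  Aadd (Aadd (Amul (t11 X) p11) (Amul (t12 X) p12)) (Aadd (Amul (t21 X) p21) (Amul (t22 X) p22)).
Definition S11 n1 n2 := Tadd (NabF n1 n2 (O1rmul e1 Ax)) (Trmul n1 Ax).
Definition S12 n1 n2 := Tadd (NabF n1 n2 (O1rmul e1 Ay)) (Trmul n1 Ay).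
Definition S21 n1 n2 := Tadd (NabF n1 n2 (O1rmul e2 Ax)) (Trmul n2 Ax).
Definition S22 n1 n2 := Tadd (NabF n1 n2 (O1rmul e2 Ay)) (Trmul n2 Ay).
Definition SigC n1 n2 := SigF (S11 n1 n2) (S12 n1 n2) (S21 n1 n2) (S22 n1 n2).

Lemma O1_decomp u : u = O1add (O1lmul (o1 u) e1) (O1lmul (o2 u) e2).
Proof. destruct u as [a b]; unfold O1add, O1lmul; simpl; f_equal; ring. Qed.
Lemma T_decomp X : X = Tadd (Tadd (Tlmul (t11 X) E11) (Tlmul (t12 X) E12)) (Tadd (Tlmul (t21 X) E21) (Tlmul (t22 X) E22)).
Proof. destruct X as [a b c d]; unfold Tadd, Tlmul; simpl; f_equal; ring. Qed.

Lemma nab_rep nab : left_connection nab -> forall u, nab u = NabF (nab e1) (nab e2) u.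
Proof. intros [Ha Hl] u. transitivity (nab (O1add (O1lmul (o1 u) e1) (O1lmul (o2 u) e2))).
  - f_equal; apply O1_decomp.
  - rewrite Ha, !Hl; reflexivity. Qed.
Lemma sig_rep sigma : bimodule_map_T sigma -> forall X, sigma X = SigF (sigma E11) (sigma E12) (sigma E21) (sigma E22) X.
Proof. intros [Ha [Hl _]] X. transitivity (sigma (Tadd (Tadd (Tlmul (t11 X) E11) (Tlmul (t12 X) E12)) (Tadd (Tlmul (t21 X) E21) (Tlmul (t22 X) E22)))).
  - f_equal; apply T_decomp.
  - rewrite !Ha, !Hl; reflexivity. Qed.
Lemma pr_rep (pr : T -> A) : (forall X Y, pr (Tadd X Y) = Aadd (pr X) (pr Y)) -> (forall a X, pr (Tlmul a X) = Amul a (pr X)) ->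
  forall X, pr X = PrF (pr E11) (pr E12) (pr E21) (pr E22) X.
Proof. intros Ha Hl X. transitivity (pr (Tadd (Tadd (Tlmul (t11 X) E11) (Tlmul (t12 X) E12)) (Tadd (Tlmul (t21 X) E21) (Tlmul (t22 X) E22)))).
  - f_equal; apply T_decomp.
  - rewrite !Ha, !Hl; reflexivity. Qed.

Lemma Tadd_cancel R S : Tadd (Tadd R S) R = S.
Proof. destruct R, S; unfold Tadd; simpl; rewrite !Aadd_cancel; reflexivity. Qed.

Lemma sig_basis nab sigma : bimodule_connection nab sigma ->
  sigma E11 = S11 (nab e1) (nab e2) /\ sigma E12 = S12 (nab e1) (nab e2) /\
  sigma E21 = S21 (nab e1) (nab e2) /\ sigma E22 = S22 (nab e1) (nab e2).
Proof.
  intros [Hl [_ Hr]]. pose proof (nab_rep nab Hl) as Hn.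
  assert (E : forall u a K, nab (O1rmul u a) = Tadd (Trmul (nab u) a) (sigma K) -> sigma K = Tadd (NabF (nab e1) (nab e2) (O1rmul u a)) (Trmul (nab u) a)).
  { intros u a K H. rewrite <- Hn, H. rewrite <- (Tadd_cancel (Trmul (nab u) a) (sigma K)) at 1.
    destruct (Trmul (nab u) a), (sigma K); unfold Tadd; simpl; f_equal; ring. }
  unfold S11, S12, S21, S22; repeat split; apply E; apply Hr.
Qed.

Definition Aadd_f (a b : A) : A :=
  match a, b with
  | mkA false false false, mkA false false false => mkA false false false
  | mkA false false false, mkA false false true => mkA false false true
  | mkA false false false, mkA false true false => mkA false true false
  | mkA false false false, mkA false true true => mkA false true true
  | mkA false false false, mkA true false false => mkA true false false
  | mkA false false false, mkA true false true => mkA true false true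
  | mkA false false false, mkA true true false => mkA true true false
  | mkA false false false, mkA true true true => mkA true true true
  | mkA false false true, mkA false false false => mkA false false true
  | mkA false false true, mkA false false true => mkA false false false
  | mkA false false true, mkA false true false => mkA false true true
  | mkA false false true, mkA false true true => mkA false true false
  | mkA false false true, mkA true false false => mkA true false true
  | mkA false false true, mkA true false true => mkA true false false
  | mkA false false true, mkA true true false => mkA true true true
  | mkA false false true, mkA true true true => mkA true true false
  | mkA false true false, mkA false false false => mkA false true false
  | mkA false true false, mkA false false true => mkA false true true
  | mkA false true false, mkA false true false => mkA false false false
  | mkA false true false, mkA false true true => mkA false false true
  | mkA false true false, mkA true false false => mkA true true false
  | mkA false true false, mkA true false true => mkA true true true
  | mkA false true false, mkA true true false => mkA true false false
  | mkA false true false, mkA true true true => mkA true false true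
  | mkA false true true, mkA false false false => mkA false true true
  | mkA false true true, mkA false false true => mkA false true false
  | mkA false true true, mkA false true false => mkA false false true
  | mkA false true true, mkA false true true => mkA false false false
  | mkA false true true, mkA true false false => mkA true true true
  | mkA false true true, mkA true false true => mkA true true false
  | mkA false true true, mkA true true false => mkA true false true
  | mkA false true true, mkA true true true => mkA true false false
  | mkA true false false, mkA false false false => mkA true false false
  | mkA true false false, mkA false false true => mkA true false true
  | mkA true false false, mkA false true false => mkA true true false
  | mkA true false false, mkA false true true => mkA true true true
  | mkA true false false, mkA true false false => mkA false false false
  | mkA true false false, mkA true false true => mkA false false true
  | mkA true false false, mkA true true false => mkA false true false
  | mkA true false false, mkA true true true => mkA false true true
  | mkA true false true, mkA false false false => mkA true false true
  | mkA true false true, mkA false false true => mkA true false false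
  | mkA true false true, mkA false true false => mkA true true true
  | mkA true false true, mkA false true true => mkA true true false
  | mkA true false true, mkA true false false => mkA false false true
  | mkA true false true, mkA true false true => mkA false false false
  | mkA true false true, mkA true true false => mkA false true true
  | mkA true false true, mkA true true true => mkA false true false
  | mkA true true false, mkA false false false => mkA true true false
  | mkA true true false, mkA false false true => mkA true true true
  | mkA true true false, mkA false true false => mkA true false false
  | mkA true true false, mkA false true true => mkA true false true
  | mkA true true false, mkA true false false => mkA false true false
  | mkA true true false, mkA true false true => mkA false true true
  | mkA true true false, mkA true true false => mkA false false false
  | mkA true true false, mkA true true true => mkA false false true
  | mkA true true true, mkA false false false => mkA true true true
  | mkA true true true, mkA false false true => mkA true true false
  | mkA true true true, mkA false true false => mkA true false true
  | mkA true true true, mkA false true true => mkA true false false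
  | mkA true true true, mkA true false false => mkA false true true
  | mkA true true true, mkA true false true => mkA false true false
  | mkA true true true, mkA true true false => mkA false false true
  | mkA true true true, mkA true true true => mkA false false false
  end.
Definition Amul_f (a b : A) : A :=
  match a, b with
  | mkA false false false, mkA false false false => mkA false false false
  | mkA false false false, mkA false false true => mkA false false false
  | mkA false false false, mkA false true false => mkA false false false
  | mkA false false false, mkA false true true => mkA false false false
  | mkA false false false, mkA true false false => mkA false false false
  | mkA false false false, mkA true false true => mkA false false false
  | mkA false false false, mkA true true false => mkA false false false
  | mkA false false false, mkA true true true => mkA false false false
  | mkA false false true, mkA false false false => mkA false false false
  | mkA false false true, mkA false false true => mkA false true false
  | mkA false false true, mkA false true false => mkA false true true
  | mkA false false true, mkA false true true => mkA false false true
  | mkA false false true, mkA true false false => mkA false false true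
  | mkA false false true, mkA true false true => mkA false true true
  | mkA false false true, mkA true true false => mkA false true false
  | mkA false false true, mkA true true true => mkA false false false
  | mkA false true false, mkA false false false => mkA false false false
  | mkA false true false, mkA false false true => mkA false true true
  | mkA false true false, mkA false true false => mkA false false true
  | mkA false true false, mkA false true true => mkA false true false
  | mkA false true false, mkA true false false => mkA false true false
  | mkA false true false, mkA true false true => mkA false false true
  | mkA false true false, mkA true true false => mkA false true true
  | mkA false true false, mkA true true true => mkA false false false
  | mkA false true true, mkA false false false => mkA false false false
  | mkA false true true, mkA false false true => mkA false false true
  | mkA false true true, mkA false true false => mkA false true false
  | mkA false true true, mkA false true true => mkA false true true
  | mkA false true true, mkA true false false => mkA false true true
  | mkA false true true, mkA true false true => mkA false true false
  | mkA false true true, mkA true true false => mkA false false true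
  | mkA false true true, mkA true true true => mkA false false false
  | mkA true false false, mkA false false false => mkA false false false
  | mkA true false false, mkA false false true => mkA false false true
  | mkA true false false, mkA false true false => mkA false true false
  | mkA true false false, mkA false true true => mkA false true true
  | mkA true false false, mkA true false false => mkA true false false
  | mkA true false false, mkA true false true => mkA true false true
  | mkA true false false, mkA true true false => mkA true true false
  | mkA true false false, mkA true true true => mkA true true true
  | mkA true false true, mkA false false false => mkA false false false
  | mkA true false true, mkA false false true => mkA false true true
  | mkA true false true, mkA false true false => mkA false false true
  | mkA true false true, mkA false true true => mkA false true false
  | mkA true false true, mkA true false false => mkA true false true
  | mkA true false true, mkA true false true => mkA true true false
  | mkA true false true, mkA true true false => mkA true false false
  | mkA true false true, mkA true true true => mkA true true true
  | mkA true true false, mkA false false false => mkA false false false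
  | mkA true true false, mkA false false true => mkA false true false
  | mkA true true false, mkA false true false => mkA false true true
  | mkA true true false, mkA false true true => mkA false false true
  | mkA true true false, mkA true false false => mkA true true false
  | mkA true true false, mkA true false true => mkA true false false
  | mkA true true false, mkA true true false => mkA true false true
  | mkA true true false, mkA true true true => mkA true true true
  | mkA true true true, mkA false false false => mkA false false false
  | mkA true true true, mkA false false true => mkA false false false
  | mkA true true true, mkA false true false => mkA false false false
  | mkA true true true, mkA false true true => mkA false false false
  | mkA true true true, mkA true false false => mkA true true true
  | mkA true true true, mkA true false true => mkA true true true
  | mkA true true true, mkA true true false => mkA true true true
  | mkA true true true, mkA true true true => mkA true true true
  end.
Lemma Aadd_f_eq a b : Aadd_f a b = Aadd a b.
Proof. destruct a as [[] [] []], b as [[] [] []]; reflexivity. Qed.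
Lemma Amul_f_eq a b : Amul_f a b = Amul a b.
Proof. destruct a as [[] [] []], b as [[] [] []]; reflexivity. Qed.
Definition Az_f : A := mkA true true false.
Definition Az2_f : A := mkA true false true.
Lemma Az_f_eq : Az_f = Az. Proof. reflexivity. Qed.
Lemma Az2_f_eq : Az2_f = Az2. Proof. reflexivity. Qed.
Definition O1add_f (u v : Om1) : Om1 := mkO1 (Aadd_f (o1 u) (o1 v)) (Aadd_f (o2 u) (o2 v)).
Definition O1lmul_f (a : A) (u : Om1) : Om1 := mkO1 (Amul_f a (o1 u)) (Amul_f a (o2 u)).
Definition O1rz_f (u : Om1) : Om1 :=
  mkO1 (Aadd_f (Amul_f (o1 u) Az_f) (Amul_f (o2 u) Az2_f)) (o1 u).
Definition O1rmul_f (u : Om1) (a : A) : Om1 :=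
  O1add_f (O1add_f (if a0 a then u else O1zero)
               (if a1 a then O1add_f u (O1rz_f u) else O1zero))
        (if a2 a then O1add_f u (O1rz_f (O1rz_f u)) else O1zero).
Definition Tadd_f (X Y : T) : T :=
  mkT (Aadd_f (t11 X) (t11 Y)) (Aadd_f (t12 X) (t12 Y)) (Aadd_f (t21 X) (t21 Y)) (Aadd_f (t22 X) (t22 Y)).
Definition Tlmul_f (a : A) (X : T) : T :=
  mkT (Amul_f a (t11 X)) (Amul_f a (t12 X)) (Amul_f a (t21 X)) (Amul_f a (t22 X)).
Definition tens_f (u v : Om1) : T :=
  let p := O1rmul_f u (o1 v) in let q := O1rmul_f u (o2 v) in
  mkT (o1 p) (o1 q) (o2 p) (o2 q).
Definition Trmul_f (X : T) (a : A) : T :=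
  Tadd_f (tens_f (col1 X) (O1rmul_f e1 a)) (tens_f (col2 X) (O1rmul_f e2 a)).
Definition NabF_f (n1 n2 : T) (u : Om1) : T :=
  Tadd_f (Tadd_f (Tlmul_f (o1 u) n1) (tens_f (dA (o1 u)) e1)) (Tadd_f (Tlmul_f (o2 u) n2) (tens_f (dA (o2 u)) e2)).
Definition SigF_f (s11 s12 s21 s22 : T) (X : T) : T :=
  Tadd_f (Tadd_f (Tlmul_f (t11 X) s11) (Tlmul_f (t12 X) s12)) (Tadd_f (Tlmul_f (t21 X) s21) (Tlmul_f (t22 X) s22)).
Definition S11_f n1 n2 := Tadd_f (NabF_f n1 n2 (O1rmul_f e1 Ax)) (Trmul_f n1 Ax).
Definition S12_f n1 n2 := Tadd_f (NabF_f n1 n2 (O1rmul_f e1 Ay)) (Trmul_f n1 Ay).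
Definition S21_f n1 n2 := Tadd_f (NabF_f n1 n2 (O1rmul_f e2 Ax)) (Trmul_f n2 Ax).
Definition S22_f n1 n2 := Tadd_f (NabF_f n1 n2 (O1rmul_f e2 Ay)) (Trmul_f n2 Ay).

Lemma O1add_f_eq u v : O1add_f u v = O1add u v.
Proof. unfold O1add_f, O1add; rewrite !Aadd_f_eq; reflexivity. Qed.
Lemma O1lmul_f_eq a u : O1lmul_f a u = O1lmul a u.
Proof. unfold O1lmul_f, O1lmul; rewrite !Amul_f_eq; reflexivity. Qed.
Lemma O1rz_f_eq u : O1rz_f u = O1rz u.
Proof. unfold O1rz_f, O1rz; rewrite !Amul_f_eq, !Aadd_f_eq, Az_f_eq, Az2_f_eq; reflexivity. Qed.
Lemma O1rmul_f_eq u a : O1rmul_f u a = O1rmul u a.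
Proof. unfold O1rmul_f, O1rmul; rewrite !O1rz_f_eq, !O1add_f_eq; reflexivity. Qed.
Lemma Tadd_f_eq X Y : Tadd_f X Y = Tadd X Y.
Proof. unfold Tadd_f, Tadd; rewrite !Aadd_f_eq; reflexivity. Qed.
Lemma Tlmul_f_eq a X : Tlmul_f a X = Tlmul a X.
Proof. unfold Tlmul_f, Tlmul; rewrite !Amul_f_eq; reflexivity. Qed.
Lemma tens_f_eq u v : tens_f u v = tens u v.
Proof. unfold tens_f, tens; rewrite !O1rmul_f_eq; reflexivity. Qed.
Lemma Trmul_f_eq X a : Trmul_f X a = Trmul X a.
Proof. unfold Trmul_f, Trmul; rewrite !O1rmul_f_eq, !tens_f_eq, !Tadd_f_eq; reflexivity. Qed.
Lemma NabF_f_eq n1 n2 u : NabF_f n1 n2 u = NabF n1 n2 u.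
Proof. unfold NabF_f, NabF; rewrite !tens_f_eq, !Tlmul_f_eq, !Tadd_f_eq; reflexivity. Qed.
Lemma SigF_f_eq a b c d X : SigF_f a b c d X = SigF a b c d X.
Proof. unfold SigF_f, SigF; rewrite !Tlmul_f_eq, !Tadd_f_eq; reflexivity. Qed.
Lemma S_f_eq n1 n2 : S11_f n1 n2 = S11 n1 n2 /\ S12_f n1 n2 = S12 n1 n2 /\ S21_f n1 n2 = S21 n1 n2 /\ S22_f n1 n2 = S22 n1 n2.
Proof. unfold S11_f, S12_f, S21_f, S22_f, S11, S12, S21, S22;
  rewrite !O1rmul_f_eq, !NabF_f_eq, !Trmul_f_eq, !Tadd_f_eq; repeat split. Qed.

Definition mcl1 (nab : Om1 -> T) (sigma : T -> T) (g : T) : T :=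
  Tadd (nab (col1 g)) (Tadd (sigma (tens (col1 g) (col1 (nab e1)))) (sigma (tens (col2 g) (col1 (nab e2))))).
Definition mcl2 (nab : Om1 -> T) (sigma : T -> T) (g : T) : T :=
  Tadd (nab (col2 g)) (Tadd (sigma (tens (col1 g) (col2 (nab e1)))) (sigma (tens (col2 g) (col2 (nab e2))))).
Lemma mc_unfold nab sigma g : metric_compatible nab sigma g <-> (mcl1 nab sigma g = Tzero /\ mcl2 nab sigma g = Tzero).
Proof. reflexivity. Qed.

Definition NabG (a b : A) (k1 k2 : T) (n1 n2 : T) : T :=
  Tadd (Tadd (Tlmul a n1) k1) (Tadd (Tlmul b n2) k2).
Definition NabG_f (a b : A) (k1 k2 : T) (n1 n2 : T) : T :=
  Tadd_f (Tadd_f (Tlmul_f a n1) k1) (Tadd_f (Tlmul_f b n2) k2).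
Lemma NabG_f_eq a b k1 k2 n1 n2 : NabG_f a b k1 k2 n1 n2 = NabG a b k1 k2 n1 n2.
Proof. unfold NabG_f, NabG; rewrite !Tlmul_f_eq, !Tadd_f_eq; reflexivity. Qed.
Record NC := mkNC { nca : A; ncb : A; nck1 : T; nck2 : T }.
Definition ncof (w : Om1) : NC := mkNC (o1 w) (o2 w) (tens (dA (o1 w)) e1) (tens (dA (o2 w)) e2).
Definition NabC_f (c : NC) n1 n2 := NabG_f (nca c) (ncb c) (nck1 c) (nck2 c) n1 n2.
Record GC := mkGC { c1x : NC; c1y : NC; c2x : NC; c2y : NC; cg1 : NC; cg2 : NC }.
Definition gcof (g : T) : GC :=
  mkGC (ncof (O1rmul e1 Ax)) (ncof (O1rmul e1 Ay)) (ncof (O1rmul e2 Ax)) (ncof (O1rmul e2 Ay)) (ncof (col1 g)) (ncof (col2 g)).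
Record Pre := mkPre { pn : T; prx : T; pry : T; pt11 : T; pt21 : T; pt12 : T; pt22 : T }.
Definition preof (g n : T) : Pre :=
  mkPre n (Trmul_f n Ax) (Trmul_f n Ay) (tens_f (col1 g) (col1 n)) (tens_f (col2 g) (col1 n))
        (tens_f (col1 g) (col2 n)) (tens_f (col2 g) (col2 n)).
Definition mcb_o (C : GC) (p1 p2 : Pre) : bool :=
  let n1 := pn p1 in let n2 := pn p2 in
  let s11 := Tadd_f (NabC_f (c1x C) n1 n2) (prx p1) in
  let s12 := Tadd_f (NabC_f (c1y C) n1 n2) (pry p1) in
  let s21 := Tadd_f (NabC_f (c2x C) n1 n2) (prx p2) in
  let s22 := Tadd_f (NabC_f (c2y C) n1 n2) (pry p2) in
  Teqb (Tadd_f (NabC_f (cg1 C) n1 n2) (Tadd_f (SigF_f s11 s12 s21 s22 (pt11 p1)) (SigF_f s11 s12 s21 s22 (pt21 p2)))) Tzero &&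
  Teqb (Tadd_f (NabC_f (cg2 C) n1 n2) (Tadd_f (SigF_f s11 s12 s21 s22 (pt12 p1)) (SigF_f s11 s12 s21 s22 (pt22 p2)))) Tzero.


Lemma NabF_e1 n1 n2 : NabF n1 n2 e1 = n1.
Proof. unfold NabF. simpl o1. simpl o2.
  replace (tens (dA Aone) e1) with Tzero by reflexivity.
  replace (tens (dA Azero) e2) with Tzero by reflexivity.
  destruct n1, n2; unfold Tadd, Tlmul, Tzero; simpl; f_equal; ring. Qed.
Lemma NabF_e2 n1 n2 : NabF n1 n2 e2 = n2.
Proof. unfold NabF. simpl o1. simpl o2.
  replace (tens (dA Aone) e2) with Tzero by reflexivity.
  replace (tens (dA Azero) e1) with Tzero by reflexivity.
  destruct n1, n2; unfold Tadd, Tlmul, Tzero; simpl; f_equal; ring. Qed.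

Lemma mcb_o_eq g n1 n2 : mcb_o (gcof g) (preof g n1) (preof g n2) =
  Teqb (mcl1 (NabF n1 n2) (SigC n1 n2) g) Tzero && Teqb (mcl2 (NabF n1 n2) (SigC n1 n2) g) Tzero.
Proof.
  unfold mcl1, mcl2. rewrite !NabF_e1, !NabF_e2.
  unfold mcb_o, gcof, preof, NabC_f. cbn [pn prx pry pt11 pt21 pt12 pt22 c1x c1y c2x c2y cg1 cg2 nca ncb nck1 nck2].
  rewrite !NabG_f_eq, !Trmul_f_eq, !tens_f_eq, !Tadd_f_eq, !SigF_f_eq.
  reflexivity.
Qed.

Lemma mcb_o_sound g n1 n2 : mcb_o (gcof g) (preof g n1) (preof g n2) = true <-> metric_compatible (NabF n1 n2) (SigC n1 n2) g.
Proof.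
  rewrite mcb_o_eq, mc_unfold, andb_true_iff; split; intros [H1 H2]; split.
  - apply Teqb_eq; exact H1.
  - apply Teqb_eq; exact H2.
  - rewrite H1; apply Teqb_refl.
  - rewrite H2; apply Teqb_refl.
Qed.

Definition tor (a b c : A) : T := mkT (Amul Az2 c) a b c.
Definition allTor : list T :=
  flat_map (fun a => flat_map (fun b => map (fun c => tor a b c) allA) allA) allA.
Lemma allTor_spec a b c : In (tor a b c) allTor.
Proof. unfold allTor.
  apply in_flat_map; exists a; split; [apply allA_spec|].
  apply in_flat_map; exists b; split; [apply allA_spec|].
  apply in_map_iff; exists c; split; [reflexivity | apply allA_spec].
Qed.
Definition cand g :=
  let C := gcof g in let P := map (preof g) allTor in
  flat_map (fun p1 => map (fun p2 => (pn p1, pn p2)) (filter (fun p2 => mcb_o C p1 p2) P)) P.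
Lemma cand_in g n1 n2 : In n1 allTor -> In n2 allTor -> mcb_o (gcof g) (preof g n1) (preof g n2) = true ->
  In (n1, n2) (cand g).
Proof. intros H1 H2 H. unfold cand. cbv zeta.
  apply in_flat_map; exists (preof g n1); split; [apply in_map; exact H1|].
  apply in_map_iff; exists (preof g n2); split; [reflexivity|].
  apply filter_In; split; [apply in_map; exact H2 | exact H].
Qed.

Lemma tor_of n : wedge n = Azero -> n = tor (t12 n) (t21 n) (t22 n).
Proof. destruct n as [a b c d]; unfold wedge, tor; simpl; intro H; apply Aadd_zero_eq in H; subst; reflexivity. Qed.

Definition L1 : list (T * T) :=
  [ ((mkT (mkA true false true) (mkA false true false) (mkA false true false) (mkA true false false)),
     (mkT (mkA true false true) (mkA true true false) (mkA true false true) (mkA true false false)));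
    ((mkT (mkA false true true) (mkA false true false) (mkA true true false) (mkA false false true)),
     (mkT (mkA true false true) (mkA false false false) (mkA false true true) (mkA true false false)));
    ((mkT (mkA false true true) (mkA true true false) (mkA false true false) (mkA false false true)),
     (mkT (mkA false false false) (mkA true true false) (mkA false true true) (mkA false false false)));
    ((mkT (mkA true false true) (mkA true true false) (mkA true true false) (mkA true false false)),
     (mkT (mkA false false false) (mkA false false false) (mkA true false true) (mkA false false false))) ].
Definition Lz : list (T * T) :=
  [ ((mkT (mkA true false false) (mkA false true true) (mkA false false false) (mkA true true false)),
     (mkT (mkA false true false) (mkA true false true) (mkA false false true) (mkA false true true)));
    ((mkT (mkA false false false) (mkA false true true) (mkA true false true) (mkA false false false)),
     (mkT (mkA false true false) (mkA false false true) (mkA true false true) (mkA false true true)));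
    ((mkT (mkA false false false) (mkA true true false) (mkA false false false) (mkA false false false)),
     (mkT (mkA true false false) (mkA true false true) (mkA true false true) (mkA true true false)));
    ((mkT (mkA true false false) (mkA true true false) (mkA true false true) (mkA true true false)),
     (mkT (mkA true false false) (mkA false false true) (mkA false false true) (mkA true true false))) ].
Definition Lz2 : list (T * T) :=
  [ ((mkT (mkA true false true) (mkA false false false) (mkA false false false) (mkA true false false)),
     (mkT (mkA false false false) (mkA false false false) (mkA true false true) (mkA false false false)));
    ((mkT (mkA false false false) (mkA false false false) (mkA true true false) (mkA false false false)),
     (mkT (mkA false false false) (mkA true false true) (mkA false false false) (mkA false false false)));
    ((mkT (mkA false false false) (mkA true true false) (mkA false false false) (mkA false false false)),
     (mkT (mkA true false false) (mkA false false false) (mkA false false false) (mkA true true false)));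
    ((mkT (mkA true false true) (mkA true true false) (mkA true true false) (mkA true false false)),
     (mkT (mkA true false false) (mkA true false true) (mkA true false true) (mkA true true false))) ].
Definition Peqb (p q : T * T) : bool := Teqb (fst p) (fst q) && Teqb (snd p) (snd q).
Lemma Peqb_eq p q : Peqb p q = true -> p = q.
Proof. destruct p, q; unfold Peqb; simpl; intro H; apply andb_true_iff in H; destruct H as [H1 H2];
  apply Teqb_eq in H1, H2; subst; reflexivity. Qed.
Lemma sub_lemma (l L : list (T*T)) : forallb (fun p => existsb (Peqb p) L) l = true -> forall p, In p l -> In p L.
Proof. rewrite forallb_forall. intros H p Hp. specialize (H p Hp). apply existsb_exists in H.
  destruct H as [q [Hq E]]. apply Peqb_eq in E; subst; exact Hq. Qed.


Lemma SigF_add a b c d X Y : SigF a b c d (Tadd X Y) = Tadd (SigF a b c d X) (SigF a b c d Y).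
Proof. destruct a, b, c, d, X, Y; unfold SigF, Tadd, Tlmul; simpl; f_equal; ring. Qed.
Lemma SigF_lmul a b c d k X : SigF a b c d (Tlmul k X) = Tlmul k (SigF a b c d X).
Proof. destruct a, b, c, d, X; unfold SigF, Tadd, Tlmul; simpl; f_equal; ring. Qed.
Lemma SigF_comp a b c d r11 r12 r21 r22 X :
  SigF a b c d (SigF r11 r12 r21 r22 X) =
  SigF (SigF a b c d r11) (SigF a b c d r12) (SigF a b c d r21) (SigF a b c d r22) X.
Proof. destruct a, b, c, d, r11, r12, r21, r22, X; unfold SigF, Tadd, Tlmul; simpl; f_equal; ring. Qed.
Lemma PrF_add a b c d X Y : PrF a b c d (Tadd X Y) = Aadd (PrF a b c d X) (PrF a b c d Y).
Proof. destruct X, Y; unfold PrF, Tadd; simpl; ring. Qed.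
Lemma PrF_lmul a b c d k X : PrF a b c d (Tlmul k X) = Amul k (PrF a b c d X).
Proof. destruct X; unfold PrF, Tlmul; simpl; ring. Qed.
Lemma PrF_comp a b c d r11 r12 r21 r22 X :
  PrF a b c d (SigF r11 r12 r21 r22 X) =
  PrF (PrF a b c d r11) (PrF a b c d r12) (PrF a b c d r21) (PrF a b c d r22) X.
Proof. destruct r11, r12, r21, r22, X; unfold PrF, SigF, Tadd, Tlmul; simpl; ring. Qed.

Lemma Trmul_decomp_b : forallb (fun a =>
   let r11 := Trmul_f E11 a in let r12 := Trmul_f E12 a in let r21 := Trmul_f E21 a in let r22 := Trmul_f E22 a in
   forallb (fun X => Teqb (Trmul_f X a) (SigF_f r11 r12 r21 r22 X)) allT) allA = true.
Proof. vm_cast_no_check (eq_refl true). Qed.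
Lemma Trmul_decomp X a : Trmul X a = SigF (Trmul E11 a) (Trmul E12 a) (Trmul E21 a) (Trmul E22 a) X.
Proof.
  pose proof (forallA _ Trmul_decomp_b a) as H. cbv zeta in H.
  pose proof (forallT _ H X) as H2. apply Teqb_eq in H2.
  rewrite !Trmul_f_eq, SigF_f_eq in H2. exact H2.
Qed.

Lemma sig_bimod a b c d :
  (forall k, SigF a b c d (Trmul E11 k) = Trmul a k /\ SigF a b c d (Trmul E12 k) = Trmul b k /\
             SigF a b c d (Trmul E21 k) = Trmul c k /\ SigF a b c d (Trmul E22 k) = Trmul d k) ->
  bimodule_map_T (SigF a b c d).
Proof.
  intro H. split; [intros; apply SigF_add | split; [intros; apply SigF_lmul |]].
  intros k X. rewrite (Trmul_decomp X k), (Trmul_decomp (SigF a b c d X) k), !SigF_comp.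
  destruct (H k) as [H1 [H2 [H3 H4]]]. rewrite H1, H2, H3, H4.
  rewrite (Trmul_decomp a k), (Trmul_decomp b k), (Trmul_decomp c k), (Trmul_decomp d k). reflexivity.
Qed.

Lemma pr_bimod a b c d :
  (forall k, PrF a b c d (Trmul E11 k) = Amul a k /\ PrF a b c d (Trmul E12 k) = Amul b k /\
             PrF a b c d (Trmul E21 k) = Amul c k /\ PrF a b c d (Trmul E22 k) = Amul d k) ->
  forall k X, PrF a b c d (Trmul X k) = Amul (PrF a b c d X) k.
Proof.
  intros H k X. rewrite (Trmul_decomp X k), PrF_comp.
  destruct (H k) as [H1 [H2 [H3 H4]]]. rewrite H1, H2, H3, H4.
  destruct X; unfold PrF; simpl; ring.
Qed.

Definition qlcb (g n1 n2 : T) : bool :=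
  let nab := NabF n1 n2 in let sigma := SigC n1 n2 in
  forallb (fun u => forallb (fun v => Teqb (nab (O1add u v)) (Tadd (nab u) (nab v))) allO) allO &&
  forallb (fun a => forallb (fun u => Teqb (nab (O1lmul a u)) (Tadd (Tlmul a (nab u)) (tens (dA a) u))) allO) allA &&
  forallb (fun k => Teqb (sigma (Trmul E11 k)) (Trmul (S11 n1 n2) k) && Teqb (sigma (Trmul E12 k)) (Trmul (S12 n1 n2) k)
              && Teqb (sigma (Trmul E21 k)) (Trmul (S21 n1 n2) k) && Teqb (sigma (Trmul E22 k)) (Trmul (S22 n1 n2) k)) allA &&
  forallb (fun u => forallb (fun a => Teqb (nab (O1rmul u a)) (Tadd (Trmul (nab u) a) (sigma (tens u (dA a))))) allA) allO &&
  forallb (fun u => Aeqb (wedge (nab u)) (d1 u)) allO &&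
  mcb_o (gcof g) (preof g n1) (preof g n2).

Lemma qlcb_sound g n1 n2 : qlcb g n1 n2 = true -> QLC g (NabF n1 n2) (SigC n1 n2).
Proof.
  unfold qlcb; cbv zeta. rewrite !andb_true_iff. intros [[[[[H1 H2] H3] H4] H5] H6].
  split; [split; [split|split]|split].
  - intros u v; apply Teqb_eq; exact (forallO _ (forallO _ H1 u) v).
  - intros a u; apply Teqb_eq; exact (forallO _ (forallA _ H2 a) u).
  - unfold SigC; apply sig_bimod. intro k. pose proof (forallA _ H3 k) as H. rewrite !andb_true_iff in H.
    destruct H as [[[Ha Hb] Hc] Hd]; apply Teqb_eq in Ha, Hb, Hc, Hd. auto.
  - intros u a; apply Teqb_eq; exact (forallA _ (forallO _ H4 u) a).
  - intro u; apply Aeqb_eq; exact (forallO _ H5 u).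
  - apply mcb_o_sound; exact H6.
Qed.


Lemma O1eqb_refl u : O1eqb u u = true.
Proof. destruct u; unfold O1eqb; simpl; rewrite !Aeqb_refl; reflexivity. Qed.
Lemma Veqb_refl u : Veqb u u = true.
Proof. destruct u; unfold Veqb; simpl; rewrite !Aeqb_refl; reflexivity. Qed.

Lemma mc_ext nab sigma nab' sigma' g : (forall u, nab u = nab' u) -> (forall X, sigma X = sigma' X) ->
  metric_compatible nab sigma g -> metric_compatible nab' sigma' g.
Proof. intros Hn Hs H. unfold metric_compatible in *. rewrite <- !Hn, <- !Hs. exact H. Qed.

Lemma curv_ext nab nab' u : (forall v, nab v = nab' v) -> curvature nab u = curvature nab' u.
Proof. intro H. unfold curvature. rewrite (H u). unfold curv_op. rewrite (H e1), (H e2). reflexivity. Qed.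

Definition flatb n1 n2 := forallb (fun u => Veqb (curvature (NabF n1 n2) u) Vzero) allO.
Lemma forallO_V (f : Om1 -> V) : forallb (fun u => Veqb (f u) Vzero) allO = true <-> forall u, f u = Vzero.
Proof. split.
  - intros H u. apply Veqb_eq. exact (forallO (fun u => Veqb (f u) Vzero) H u).
  - intro H. apply forallb_forall. intros u _. rewrite (H u). apply Veqb_refl.
Qed.
Lemma flatb_iff n1 n2 : flatb n1 n2 = true <-> flat (NabF n1 n2).
Proof. exact (forallO_V (curvature (NabF n1 n2))). Qed.

Lemma qlc_forward g L nab sigma : forallb (fun p => existsb (Peqb p) L) (cand g) = true -> QLC g nab sigma ->
  (forall u, nab u = NabF (nab e1) (nab e2) u) /\ (forall X, sigma X = SigC (nab e1) (nab e2) X) /\ In (nab e1, nab e2) L.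
Proof.
  intros HL [Hb [Ht Hm]].
  pose proof (sig_basis nab sigma Hb) as HB. destruct Hb as [Hl [Hs _]].
  pose proof (nab_rep nab Hl) as Hn.
  assert (Hsig : forall X, sigma X = SigC (nab e1) (nab e2) X).
  { intro X. rewrite (sig_rep sigma Hs X). destruct HB as [-> [-> [-> ->]]]. reflexivity. }
  split; [exact Hn | split; [exact Hsig|]].
  apply (sub_lemma _ _ HL). apply cand_in.
  - assert (H1 : wedge (nab e1) = Azero) by exact (Ht e1).
    rewrite (tor_of _ H1). apply allTor_spec.
  - assert (H2 : wedge (nab e2) = Azero) by exact (Ht e2).
    rewrite (tor_of _ H2). apply allTor_spec.
  - apply mcb_o_sound. apply (mc_ext nab sigma); [exact Hn | exact Hsig | exact Hm].
Qed.

Definition cp (p : T * T) : (Om1 -> T) * (T -> T) := (NabF (fst p) (snd p), SigC (fst p) (snd p)).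
Fixpoint pd (L : list (T * T)) : bool :=
  match L with [] => true | p :: l => forallb (fun q => negb (Peqb p q)) l && pd l end.

Lemma cp_neq p q : Peqb p q = false -> ~ conn_eq (cp p) (cp q).
Proof. intros H [Hn _]. simpl in Hn. pose proof (Hn e1) as H1; pose proof (Hn e2) as H2.
  rewrite !NabF_e1 in H1. rewrite !NabF_e2 in H2. destruct p, q; simpl in *; subst.
  unfold Peqb in H; simpl in H; rewrite !Teqb_refl in H; discriminate. Qed.

Lemma pd_ord L : pd L = true -> ForallOrdPairs (fun x y => ~ conn_eq x y) (map cp L).
Proof. induction L as [|p l IH]; simpl; intro H; [constructor|].
  apply andb_true_iff in H as [H1 H2]. constructor.
  - rewrite Forall_forall. intros y Hy. apply in_map_iff in Hy; destruct Hy as [q [<- Hq]].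
    apply cp_neq. rewrite forallb_forall in H1; specialize (H1 q Hq).
    destruct (Peqb p q); [discriminate|reflexivity].
  - apply IH; exact H2.
Qed.

Lemma exactly_qlc g L : forallb (fun p => existsb (Peqb p) L) (cand g) = true ->
  forallb (fun p => qlcb g (fst p) (snd p)) L = true -> pd L = true -> exactly conn_eq (isQLC g) (length L).
Proof. intros HL Hq Hd. exists (map cp L). split; [now rewrite length_map | split; [|split]].
 - intros x Hx. apply in_map_iff in Hx as [p [<- Hp]]. unfold isQLC, cp; simpl. apply qlcb_sound.
   rewrite forallb_forall in Hq. exact (Hq p Hp).
 - apply pd_ord; exact Hd.
 - intros [nab sigma] Hx. unfold isQLC in Hx; simpl in Hx.
   destruct (qlc_forward g L nab sigma HL Hx) as [Hn [Hs Hin]].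
   exists (cp (nab e1, nab e2)). split; [apply in_map; exact Hin|]. split; simpl; [exact Hn|exact Hs].
Qed.

Lemma exactly_flat g L pf : forallb (fun p => existsb (Peqb p) L) (cand g) = true ->
  qlcb g (fst pf) (snd pf) = true -> flatb (fst pf) (snd pf) = true ->
  forallb (fun p => Peqb p pf || negb (flatb (fst p) (snd p))) L = true -> exactly conn_eq (isFlatQLC g) 1.
Proof. intros HL Hq Hf Hc. exists [cp pf]. split; [reflexivity|split;[|split]].
 - intros x [<-|[]]. split; [apply qlcb_sound; assumption| apply flatb_iff; assumption].
 - constructor; [constructor | constructor].
 - intros [nab sigma] [Hq' Hf']. simpl in Hq', Hf'.
   destruct (qlc_forward g L nab sigma HL Hq') as [Hn [Hs Hin]].
   assert (HF : flatb (nab e1) (nab e2) = true).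
   { apply flatb_iff. intro u. rewrite <- (curv_ext nab _ u Hn). exact (Hf' u). }
   rewrite forallb_forall in Hc; specialize (Hc _ Hin). simpl fst in Hc; simpl snd in Hc. rewrite HF in Hc.
   destruct (Peqb (nab e1, nab e2) pf) eqn:E; [|simpl in Hc; discriminate].
   apply Peqb_eq in E. exists (cp pf). split; [left; reflexivity|]. rewrite <- E. split; simpl; [exact Hn|exact Hs].
Qed.

Lemma curv_gen g L pf c1 c2 : forallb (fun p => existsb (Peqb p) L) (cand g) = true ->
  flatb (fst pf) (snd pf) = true ->
  forallb (fun p => Peqb p pf || (Veqb (curvature (NabF (fst p) (snd p)) e1) c1 &&
                                  Veqb (curvature (NabF (fst p) (snd p)) e2) c2)) L = true ->
  forall nab sigma, QLC g nab sigma -> ~ flat nab -> curvature nab e1 = c1 /\ curvature nab e2 = c2.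
Proof. intros HL Hpf Hc nab sigma Hq Hnf.
  destruct (qlc_forward g L nab sigma HL Hq) as [Hn [_ Hin]].
  rewrite forallb_forall in Hc; specialize (Hc _ Hin). simpl fst in Hc; simpl snd in Hc.
  destruct (Peqb (nab e1, nab e2) pf) eqn:E.
  - exfalso; apply Hnf. apply Peqb_eq in E. intro u. rewrite (curv_ext nab _ u Hn).
    destruct pf as [f1 f2]; injection E as -> ->. apply flatb_iff; exact Hpf.
  - rewrite orb_false_l in Hc. apply andb_true_iff in Hc as [C1 C2]. apply Veqb_eq in C1, C2.
    rewrite (curv_ext nab _ e1 Hn), (curv_ext nab _ e2 Hn). auto.
Qed.

Definition prb_eta g a b c d eta :=
  O1eqb (mkO1 (PrF a b c d (tens eta (col1 g))) (PrF a b c d (tens eta (col2 g)))) eta &&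
  O1eqb (O1add (O1rmul (col1 g) (PrF a b c d (tens e1 eta))) (O1rmul (col2 g) (PrF a b c d (tens e2 eta)))) eta.
Definition uniq_pr g a b c d :=
  forallb (fun a' => forallb (fun b' => forallb (fun c' => forallb (fun d' =>
    negb (prb_eta g a' b' c' d' e1 && prb_eta g a' b' c' d' e2) || (Aeqb a' a && Aeqb b' b && Aeqb c' c && Aeqb d' d))
    allA) allA) allA) allA.
Definition prright a b c d :=
  forallb (fun k => Aeqb (PrF a b c d (Trmul E11 k)) (Amul a k) && Aeqb (PrF a b c d (Trmul E12 k)) (Amul b k) &&
                    Aeqb (PrF a b c d (Trmul E21 k)) (Amul c k) && Aeqb (PrF a b c d (Trmul E22 k)) (Amul d k)) allA.
Definition prfull g a b c d := prright a b c d && forallb (prb_eta g a b c d) allO && uniq_pr g a b c d.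

Lemma prfull_inv g a b c d : prfull g a b c d = true -> invertible_metric g.
Proof. unfold prfull; rewrite !andb_true_iff; intros [[Hr He] _].
  exists (PrF a b c d). split; [intros; apply PrF_add | split; [intros; apply PrF_lmul | split]].
  - intros k X; apply pr_bimod. intro k'. pose proof (forallA _ Hr k') as H. rewrite !andb_true_iff in H.
    destruct H as [[[H1 H2] H3] H4]; apply Aeqb_eq in H1, H2, H3, H4; auto.
  - intro eta. pose proof (forallO _ He eta) as H. unfold prb_eta in H. apply andb_true_iff in H as [H1 H2].
    apply O1eqb_eq in H1, H2. auto.
Qed.

Lemma prfull_uniq g a b c d : prfull g a b c d = true -> forall pr, inverse_metric g pr -> forall X, pr X = PrF a b c d X.
Proof. unfold prfull; rewrite !andb_true_iff; intros [_ Hu] pr [Ha [Hl [_ He]]].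
  pose proof (pr_rep pr Ha Hl) as Hp.
  set (p11 := pr E11) in *; set (p12 := pr E12) in *; set (p21 := pr E21) in *; set (p22 := pr E22) in *.
  clearbody p11 p12 p21 p22.
  assert (Hb : forall eta, prb_eta g p11 p12 p21 p22 eta = true).
  { intro eta. destruct (He eta) as [H1 H2]. rewrite !Hp in H1, H2. unfold prb_eta. rewrite H1, H2, !O1eqb_refl. reflexivity. }
  pose proof (forallA _ (forallA _ (forallA _ (forallA _ Hu p11) p12) p21) p22) as H. simpl in H.
  rewrite Hb, Hb in H. simpl in H. rewrite !andb_true_iff in H. destruct H as [[[H1 H2] H3] H4].
  apply Aeqb_eq in H1, H2, H3, H4. subst. exact Hp.
Qed.

Definition lapb a b c d (L : list (T * T)) (fs : list (A * A)) :=
  forallb (fun p => forallb (fun fv => Aeqb (PrF a b c d (NabF (fst p) (snd p) (dA (fst fv)))) (snd fv)) fs) L.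

Lemma lap_gen g L a b c d fs : forallb (fun p => existsb (Peqb p) L) (cand g) = true ->
  prfull g a b c d = true -> lapb a b c d L fs = true ->
  forall pr, inverse_metric g pr -> forall nab sigma, QLC g nab sigma ->
  forall fv, In fv fs -> laplacian pr nab (fst fv) = snd fv.
Proof. intros HL Hp Hl pr Hpr nab sigma Hq fv Hfv.
  destruct (qlc_forward g L nab sigma HL Hq) as [Hn [_ Hin]].
  unfold laplacian. rewrite (prfull_uniq g a b c d Hp pr Hpr), Hn.
  unfold lapb in Hl. rewrite forallb_forall in Hl. specialize (Hl _ Hin). rewrite forallb_forall in Hl.
  apply Aeqb_eq. exact (Hl fv Hfv).
Qed.

Definition centb g := Teqb (Tlmul Ax g) (Trmul g Ax) && Teqb (Tlmul Ay g) (Trmul g Ay).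
Lemma centA : forallb (fun g => negb (centb g) || Teqb g (central_form (t12 g) (t22 g))) allT = true.
Proof. vm_cast_no_check (eq_refl true). Qed.
Lemma centB : forallb (fun al => forallb (fun be => forallb (fun a =>
   Teqb (Tlmul a (central_form al be)) (Trmul (central_form al be) a)) allA) allA) allA = true.
Proof. vm_cast_no_check (eq_refl true). Qed.
Lemma qsB : forallb (fun al => forallb (fun be =>
   Bool.eqb (Aeqb (wedge (central_form al be)) Azero) (Aeqb al (Amul Az be))) allA) allA = true.
Proof. vm_cast_no_check (eq_refl true). Qed.

Lemma partA1 : forall g : T, central g <-> exists alpha beta : A, g = central_form alpha beta.
Proof. intro g; split.
  - intro H. exists (t12 g), (t22 g). pose proof (forallT _ centA g) as C. cbv beta in C.
    assert (Hc : centb g = true).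
    { unfold centb. rewrite (H Ax), (H Ay), !Teqb_refl. reflexivity. }
    rewrite Hc in C. simpl in C. apply Teqb_eq in C. exact C.
  - intros [al [be ->]] a. apply Teqb_eq. exact (forallA _ (forallA _ (forallA _ centB al) be) a).
Qed.

Lemma partA2 : forall alpha beta : A,
     quantum_symmetric (central_form alpha beta) <-> alpha = Amul Az beta.
Proof. intros al be. pose proof (forallA _ (forallA _ qsB al) be) as H. cbv beta in H.
  apply eqb_prop in H. unfold quantum_symmetric. split; intro E.
  - rewrite E, Aeqb_refl in H. symmetry in H. apply Aeqb_eq; exact H.
  - subst al. rewrite Aeqb_refl in H. apply Aeqb_eq; exact H.
Qed.

Lemma partA3 : forall beta : A, central_form (Amul Az beta) beta = gmet beta.
Proof. intros [[] [] []]; reflexivity. Qed.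

Lemma HL1 : forallb (fun p => existsb (Peqb p) L1) (cand (gmet Aone)) = true.
Proof. vm_cast_no_check (eq_refl true). Qed.
Lemma HLz : forallb (fun p => existsb (Peqb p) Lz) (cand (gmet Az)) = true.
Proof. vm_cast_no_check (eq_refl true). Qed.
Lemma HLz2 : forallb (fun p => existsb (Peqb p) Lz2) (cand (gmet Az2)) = true.
Proof. vm_cast_no_check (eq_refl true). Qed.

Lemma Q1 : forallb (fun p => qlcb (gmet Aone) (fst p) (snd p)) L1 = true. Proof. vm_cast_no_check (eq_refl true). Qed.
Lemma Qz : forallb (fun p => qlcb (gmet Az) (fst p) (snd p)) Lz = true. Proof. vm_cast_no_check (eq_refl true). Qed.
Lemma Qz2 : forallb (fun p => qlcb (gmet Az2) (fst p) (snd p)) Lz2 = true. Proof. vm_cast_no_check (eq_refl true). Qed.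
Lemma D1 : pd L1 = true. Proof. vm_cast_no_check (eq_refl true). Qed.
Lemma Dz : pd Lz = true. Proof. vm_cast_no_check (eq_refl true). Qed.
Lemma Dz2 : pd Lz2 = true. Proof. vm_cast_no_check (eq_refl true). Qed.

Definition pf1 := nth 3 L1 (Tzero, Tzero).
Definition pfz := nth 2 Lz (Tzero, Tzero).
Definition pfz2 := nth 1 Lz2 (Tzero, Tzero).
Lemma QF1 : qlcb (gmet Aone) (fst pf1) (snd pf1) = true. Proof. vm_cast_no_check (eq_refl true). Qed.
Lemma QFz : qlcb (gmet Az) (fst pfz) (snd pfz) = true. Proof. vm_cast_no_check (eq_refl true). Qed.
Lemma QFz2 : qlcb (gmet Az2) (fst pfz2) (snd pfz2) = true. Proof. vm_cast_no_check (eq_refl true). Qed.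
Lemma F1 : flatb (fst pf1) (snd pf1) = true. Proof. vm_cast_no_check (eq_refl true). Qed.
Lemma Fz : flatb (fst pfz) (snd pfz) = true. Proof. vm_cast_no_check (eq_refl true). Qed.
Lemma Fz2 : flatb (fst pfz2) (snd pfz2) = true. Proof. vm_cast_no_check (eq_refl true). Qed.
Lemma NF1 : forallb (fun p => Peqb p pf1 || negb (flatb (fst p) (snd p))) L1 = true. Proof. vm_cast_no_check (eq_refl true). Qed.
Lemma NFz : forallb (fun p => Peqb p pfz || negb (flatb (fst p) (snd p))) Lz = true. Proof. vm_cast_no_check (eq_refl true). Qed.
Lemma NFz2 : forallb (fun p => Peqb p pfz2 || negb (flatb (fst p) (snd p))) Lz2 = true. Proof. vm_cast_no_check (eq_refl true). Qed.

Definition curvchk L pf c1 c2 :=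
  forallb (fun p => Peqb p pf || (Veqb (curvature (NabF (fst p) (snd p)) e1) c1 &&
                                  Veqb (curvature (NabF (fst p) (snd p)) e2) c2)) L.
Lemma C1 : curvchk L1 pf1 (mkV Az2 Az) (mkV Aone Azero) = true. Proof. vm_cast_no_check (eq_refl true). Qed.
Lemma Cz : curvchk Lz pfz (mkV Azero Az2) (mkV Az Aone) = true. Proof. vm_cast_no_check (eq_refl true). Qed.
Lemma Cz2 : curvchk Lz2 pfz2 (mkV Az Azero) (mkV Azero Az) = true. Proof. vm_cast_no_check (eq_refl true). Qed.

Definition pA := mkA.
Lemma PF1 : prfull (gmet Aone) Azero (pA true false true) (pA true false true) (pA true false false) = true.
Proof. vm_cast_no_check (eq_refl true). Qed.
Lemma PFz : prfull (gmet Az) (pA true false false) (pA true true false) (pA true true false) Azero = true.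
Proof. vm_cast_no_check (eq_refl true). Qed.
Lemma PFz2 : prfull (gmet Az2) (pA true false true) Azero Azero (pA true true false) = true.
Proof. vm_cast_no_check (eq_refl true). Qed.
Lemma QD1 : PrF Azero (pA true false true) (pA true false true) (pA true false false) (gmet Aone) = Aone.
Proof. vm_compute. reflexivity. Qed.
Lemma QDz : PrF (pA true false false) (pA true true false) (pA true true false) Azero (gmet Az) = Aone.
Proof. vm_compute. reflexivity. Qed.
Lemma QDz2 : PrF (pA true false true) Azero Azero (pA true true false) (gmet Az2) = Azero.
Proof. vm_compute. reflexivity. Qed.
Lemma LP1 : lapb Azero (pA true false true) (pA true false true) (pA true false false) L1
   [(Aone, Azero); (Az, Aone); (Az2, Az)] = true.
Proof. vm_cast_no_check (eq_refl true). Qed.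
Lemma LPz : lapb (pA true false false) (pA true true false) (pA true true false) Azero Lz
   [(Aone, Azero); (Az, Az2); (Az2, Aone)] = true.
Proof. vm_cast_no_check (eq_refl true). Qed.
Lemma LPz2 : lapb (pA true false true) Azero Azero (pA true true false) Lz2
   (map (fun f => (f, Azero)) allA) = true.
Proof. vm_cast_no_check (eq_refl true). Qed.

Theorem mainTheorem5 :
  (* (a) central elements and quantum symmetry *)
  (forall g : T, central g <-> exists alpha beta : A, g = central_form alpha beta) /\
  (forall alpha beta : A,
     quantum_symmetric (central_form alpha beta) <-> alpha = Amul Az beta) /\
  (forall beta : A, central_form (Amul Az beta) beta = gmet beta) /\
  (* (b) for beta in {1, z, z^2}: invertible metric, exactly four QLCs, exactly one flat *)
  (forall beta : A, beta = Aone \/ beta = Az \/ beta = Az2 ->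
     invertible_metric (gmet beta) /\
     exactly conn_eq (isQLC (gmet beta)) 4 /\
     exactly conn_eq (isFlatQLC (gmet beta)) 1) /\
  (* (b) curvature of the non-flat QLCs *)
  (forall nab sigma, QLC (gmet Aone) nab sigma -> ~ flat nab ->
     curvature nab e1 = mkV Az2 Az /\ curvature nab e2 = mkV Aone Azero) /\
  (forall nab sigma, QLC (gmet Az) nab sigma -> ~ flat nab ->
     curvature nab e1 = mkV Azero Az2 /\ curvature nab e2 = mkV Az Aone) /\
  (forall nab sigma, QLC (gmet Az2) nab sigma -> ~ flat nab ->
     curvature nab e1 = mkV Az Azero /\ curvature nab e2 = mkV Azero Az) /\
  (* (c) quantum dimension and Laplacian, for any inverse (,) of g_beta *)
  (forall pr, inverse_metric (gmet Aone) pr ->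
     quantum_dimension pr (gmet Aone) = Aone /\
     forall nab sigma, QLC (gmet Aone) nab sigma ->
       laplacian pr nab Aone = Azero /\ laplacian pr nab Az = Aone /\
       laplacian pr nab Az2 = Az) /\
  (forall pr, inverse_metric (gmet Az) pr ->
     quantum_dimension pr (gmet Az) = Aone /\
     forall nab sigma, QLC (gmet Az) nab sigma ->
       laplacian pr nab Aone = Azero /\ laplacian pr nab Az = Az2 /\
       laplacian pr nab Az2 = Aone) /\
  (forall pr, inverse_metric (gmet Az2) pr ->
     quantum_dimension pr (gmet Az2) = Azero /\
     forall nab sigma, QLC (gmet Az2) nab sigma ->
       forall f : A, laplacian pr nab f = Azero).
Proof.
  split; [exact partA1|]. split; [exact partA2|]. split; [exact partA3|].
  split.
  { intros beta [ -> | [ -> | -> ] ].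
    - split; [exact (prfull_inv _ _ _ _ _ PF1)|]. split.
      + change 4 with (length L1). exact (exactly_qlc _ _ HL1 Q1 D1).
      + exact (exactly_flat _ _ _ HL1 QF1 F1 NF1).
    - split; [exact (prfull_inv _ _ _ _ _ PFz)|]. split.
      + change 4 with (length Lz). exact (exactly_qlc _ _ HLz Qz Dz).
      + exact (exactly_flat _ _ _ HLz QFz Fz NFz).
    - split; [exact (prfull_inv _ _ _ _ _ PFz2)|]. split.
      + change 4 with (length Lz2). exact (exactly_qlc _ _ HLz2 Qz2 Dz2).
      + exact (exactly_flat _ _ _ HLz2 QFz2 Fz2 NFz2). }
  split; [exact (curv_gen _ _ _ _ _ HL1 F1 C1)|].
  split; [exact (curv_gen _ _ _ _ _ HLz Fz Cz)|].
  split; [exact (curv_gen _ _ _ _ _ HLz2 Fz2 Cz2)|].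
  split.
  { intros pr Hpr. split.
    - unfold quantum_dimension. rewrite (prfull_uniq _ _ _ _ _ PF1 pr Hpr). exact QD1.
    - intros nab sigma Hq.
      pose proof (lap_gen _ _ _ _ _ _ _ HL1 PF1 LP1 pr Hpr nab sigma Hq) as H.
      split; [exact (H (Aone, Azero) ltac:(simpl; tauto))|].
      split; [exact (H (Az, Aone) ltac:(simpl; tauto))|exact (H (Az2, Az) ltac:(simpl; tauto))]. }
  split.
  { intros pr Hpr. split.
    - unfold quantum_dimension. rewrite (prfull_uniq _ _ _ _ _ PFz pr Hpr). exact QDz.
    - intros nab sigma Hq.
      pose proof (lap_gen _ _ _ _ _ _ _ HLz PFz LPz pr Hpr nab sigma Hq) as H.
      split; [exact (H (Aone, Azero) ltac:(simpl; tauto))|].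
      split; [exact (H (Az, Az2) ltac:(simpl; tauto))|exact (H (Az2, Aone) ltac:(simpl; tauto))]. }
  { intros pr Hpr. split.
    - unfold quantum_dimension. rewrite (prfull_uniq _ _ _ _ _ PFz2 pr Hpr). exact QDz2.
    - intros nab sigma Hq f.
      exact (lap_gen _ _ _ _ _ _ _ HLz2 PFz2 LPz2 pr Hpr nab sigma Hq (f, Azero) (in_map _ _ _ (allA_spec f))). }
Qed.
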